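(* Let $P$ be a basic program. Every answer set by complement of $P$ is an answer set by reduct of $P$. Moreover, if $P$ is naf-monotone, then every answer set by reduct of $P$ is an answer set by complement of $P$.
   Context: Fix a countable set $\mathcal{A}$ of atoms. A c-atom is $A=(A_d,A_c)$, $A_d\subseteq\mathcal{A}$, $A_c\subseteq 2^{A_d}$; $(\{p\},\{\{p\}\})$ is the elementary c-atom $p$; $\bot=(\mathcal{A},\emptyset)$. $A$ is monotone if $X\subseteq Y\subseteq A_d$ and $X\in A_c$ imply $Y\in A_c$. A rule: $A\leftarrow A_1,\dots,A_k,\mathit{not}\,A_{k+1},\dots,\mathit{not}\,A_n$; $head(r)=A$, $pos(r)=\{A_1,\dots,A_k\}$, $neg(r)=\{A_{k+1},\dots,A_n\}$. Program = set of rules; positive if all $neg(r)=\emptyset$; basic if every head is elementary or $\bot$; naf-monotone if every c-atom in some $neg(r)$ is monotone. $S\models A$ iff $S\cap A_d\in A_c$; $S\models\mathit{not}\,A$ iff $S\cap A_d\notin A_c$; rule satisfied if head satisfied or some body element not satisfied; model = satisfies all rules. Conditional satisfaction: $S\models_M A$ iff $S\models A$ and every $I$ with $S\cap A_d\subseteq I\subseteq M\cap A_d$ lies in $A_c$. For positive basic $P$: $T_P(S,M)=\{a\mid \exists r\in P,\ head(r)=(\{a\},\{\{a\}\}),\ S\models_M B\ \forall B\in pos(r)\}$, $T^0_P(\emptyset,M)=\emptyset$, $T^{i+1}_P(\emptyset,M)=T_P(T^i_P(\emptyset,M),M)$, $T^\infty_P(\emptyset,M)=\bigcup_i T^i_P(\emptyset,M)$;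 a model $M$ of $P$ is an answer set iff $M=T^\infty_P(\emptyset,M)$. The complement of $A$ is $\bar A=(A_d,2^{A_d}\setminus A_c)$; $\mathcal{C}(P)$ is obtained from $P$ by replacing each $\mathit{not}\,A$ by $\bar A$; $M$ is an answer set by complement of basic $P$ iff it is an answer set of $\mathcal{C}(P)$. The reduct $P^M$ is obtained by deleting every rule having some $\mathit{not}\,A$ in its body with $M\models A$, and deleting all naf-literals from the remaining rules; $M$ is an answer set by reduct of $P$ iff it is an answer set of $P^M$. *)

(* Defs.v *)
From Stdlib Require Import List.
Import ListNotations.
Set Implicit Arguments.

Section Defs.
Variable Atom : Type.

Definition aset := Atom -> Prop.
Definition subset (X Y : aset) : Prop := forall x, X x -> Y x.
Definition set_eq (X Y : aset) : Prop := forall x, X x <-> Y x.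
Definition inter (X Y : aset) : aset := fun x => X x /\ Y x.

(* A c-atom A = (A_d, A_c), with A_c a set of subsets of A_d. *)
Record catom := CAtom { dom : aset ; conds : aset -> Prop }.

Definition wf_catom (A : catom) : Prop :=
  forall X, conds A X -> subset X (dom A).

Definition elem (p : Atom) : catom :=
  CAtom (fun x => x = p) (fun X => set_eq X (fun x => x = p)).

Definition bot : catom := CAtom (fun _ => True) (fun _ => False).

Definition monotone (A : catom) : Prop :=
  forall X Y, subset X Y -> subset Y (dom A) -> conds A X -> conds A Y.

Record rule := Rule { head : catom ; pos : list catom ; neg : list catom }.

Definition program := rule -> Prop.

Definition wf_program (P : program) : Prop :=
  forall r, P r -> wf_catom (head r) /\
    (forall A, In A (pos r) -> wf_catom A) /\ (forall A, In A (neg r) -> wf_catom A).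

Definition positive (P : program) : Prop := forall r, P r -> neg r = [].

Definition basic (P : program) : Prop :=
  forall r, P r -> (exists p, head r = elem p) \/ head r = bot.

Definition naf_monotone (P : program) : Prop :=
  forall r, P r -> forall A, In A (neg r) -> monotone A.

Definition sat (S : aset) (A : catom) : Prop := conds A (inter S (dom A)).

Definition sat_not (S : aset) (A : catom) : Prop := ~ conds A (inter S (dom A)).

Definition sat_rule (S : aset) (r : rule) : Prop :=
  sat S (head r) \/ (exists B, In B (pos r) /\ ~ sat S B)
                 \/ (exists B, In B (neg r) /\ ~ sat_not S B).

Definition model (S : aset) (P : program) : Prop := forall r, P r -> sat_rule S r.

Definition csat (S M : aset) (A : catom) : Prop :=
  sat S A /\ forall I, subset (inter S (dom A)) I -> subset I (inter M (dom A)) ->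
                       conds A I.

Definition TP (P : program) (S M : aset) : aset :=
  fun a => exists r, P r /\ head r = elem a /\ forall B, In B (pos r) -> csat S M B.

Fixpoint TPn (P : program) (M : aset) (n : nat) : aset :=
  match n with
  | 0 => fun _ => False
  | S n' => TP P (TPn P M n') M
  end.

Definition TPinf (P : program) (M : aset) : aset := fun a => exists n, TPn P M n a.

(* answer set of a positive basic program *)
Definition answer_set (P : program) (M : aset) : Prop :=
  model M P /\ set_eq M (TPinf P M).

Definition compl (A : catom) : catom :=
  CAtom (dom A) (fun X => subset X (dom A) /\ ~ conds A X).

Definition compl_rule (r : rule) : rule :=
  Rule (head r) (pos r ++ map compl (neg r)) [].

Definition complement_program (P : program) : program :=
  fun r' => exists r, P r /\ r' = compl_rule r.

Definition answer_set_by_complement (P : program) (M : aset) : Prop :=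
  answer_set (complement_program P) M.

Definition reduct (P : program) (M : aset) : program :=
  fun r' => exists r, P r /\ (forall A, In A (neg r) -> ~ sat M A) /\
                      r' = Rule (head r) (pos r) [].

Definition answer_set_by_reduct (P : program) (M : aset) : Prop :=
  answer_set (reduct P M) M.

End Defs.

(* Main.v *)
Require Import Defs.
From Stdlib Require Import List Classical.
Import ListNotations.

Section H.
Variable Atom : Type.

Lemma csat_mono (S S' M : aset Atom) B :
  subset S S' -> subset S' M -> csat S M B -> csat S' M B.
Proof.
  intros H1 H2 [Hs Hall]. split.
  - unfold sat. apply Hall.
    + intros x [Hx Hd]. split; auto.
    + intros x [Hx Hd]. split; auto.
  - intros I HI HIM. apply Hall; auto.
    intros x [Hx Hd]. apply HI. split; auto.
Qed.

Lemma TP_mono (Q : program Atom) S S' M :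
  subset S S' -> subset S' M -> subset (TP Q S M) (TP Q S' M).
Proof.
  intros H1 H2 a [r [Hr [Hh Hp]]]. exists r. split; [exact Hr|split; [exact Hh|]].
  intros B0 HB0. eapply csat_mono; eauto.
Qed.

Lemma TPn_sub_M (Q : program Atom) M :
  (forall r, Q r -> neg r = []) -> model M Q -> forall n, subset (TPn Q M n) M.
Proof.
  intros Hneg Hm n. induction n as [|n IH]; simpl.
  - intros x [].
  - intros a [r [Hr [Hh Hp]]].
    destruct (Hm r Hr) as [Hs | [[B [HB HnB]] | [B [HB _]]]].
    + rewrite Hh in Hs. unfold sat in Hs. simpl in Hs.
      destruct (Hs a) as [_ H]. destruct (H eq_refl); auto.
    + exfalso. apply HnB. destruct (Hp B HB) as [_ Hall].
      apply Hall.
      * intros x [Hx Hd]. split; auto.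
      * intros x Hx; exact Hx.
    + rewrite (Hneg r Hr) in HB. destruct HB.
Qed.

Lemma TPn_incl (Q1 Q2 : program Atom) M :
  (forall S, subset S M -> subset (TP Q1 S M) (TP Q2 S M)) ->
  (forall n, subset (TPn Q2 M n) M) ->
  forall n, subset (TPn Q1 M n) (TPn Q2 M n).
Proof.
  intros Hk Hsub n. induction n as [|n IH]; simpl.
  - intros x [].
  - intros a Ha.
    assert (HS : subset (TPn Q1 M n) M) by (intros x Hx; apply Hsub with n; auto).
    apply (TP_mono Q2 (TPn Q1 M n) (TPn Q2 M n) M IH (Hsub n)).
    apply Hk; auto.
Qed.

Lemma fix_transfer (Q1 Q2 : program Atom) M :
  (forall S, subset S M -> subset (TP Q1 S M) (TP Q2 S M)) ->
  (forall n, subset (TPn Q2 M n) M) ->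
  set_eq M (TPinf Q1 M) -> set_eq M (TPinf Q2 M).
Proof.
  intros Hk Hsub Heq x. split.
  - intros Hx. destruct (proj1 (Heq x) Hx) as [n Hn].
    exists n. eapply TPn_incl; eauto.
  - intros [n Hn]. eapply Hsub; eauto.
Qed.

Lemma compl_neg (P : program Atom) r' : complement_program P r' -> neg r' = [].
Proof. intros [r [_ ->]]. reflexivity. Qed.

Lemma red_neg (P : program Atom) M r' : reduct P M r' -> neg r' = [].
Proof. intros [r [_ [_ ->]]]. reflexivity. Qed.

End H.

Theorem proposition2 (Atom : Type)
  (Atom_countable : exists f : Atom -> nat, forall x y, f x = f y -> x = y)
  (P : program Atom) (HP : basic P) (Hwf : wf_program P) :
  (forall M : aset Atom, answer_set_by_complement P M -> answer_set_by_reduct P M) /\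
  (naf_monotone P ->
   forall M : aset Atom, answer_set_by_reduct P M -> answer_set_by_complement P M).
Proof.
  split.
  - intros M [Hm Heq].
    assert (HmR : model M (reduct P M)).
    { intros r' [r [Hr [Hn ->]]].
      destruct (Hm (compl_rule r) (ex_intro _ r (conj Hr eq_refl)))
        as [Hs | [[B [HB HnB]] | [B [HB _]]]].
      - left. exact Hs.
      - simpl in HB. apply in_app_or in HB. destruct HB as [HB | HB].
        + right. left. exists B. auto.
        + exfalso. apply in_map_iff in HB. destruct HB as [A [<- HA]].
          apply HnB. unfold sat. simpl. split.
          * intros x [_ Hd]; exact Hd.
          * exact (Hn A HA).
      - destruct HB. }
    split; auto.
    apply (@fix_transfer Atom (complement_program P)); auto.
    + intros S HS a [r' [[r [Hr ->]] [Hh Hp]]].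
      exists (Rule (Defs.head r) (pos r) []). split; [|split; auto].
      * exists r. repeat split; auto.
        intros A HA HsA.
        assert (Hc : csat S M (compl A)).
        { apply Hp. simpl. apply in_or_app. right. apply in_map; auto. }
        destruct Hc as [_ Hall].
        destruct (Hall (inter M (dom A))) as [_ Hn].
        -- intros x [Hx Hd]. split; auto.
        -- intros x Hx; exact Hx.
        -- exact (Hn HsA).
      * simpl. intros B HB. apply Hp. simpl. apply in_or_app. auto.
    + apply TPn_sub_M; auto. apply red_neg.
  - intros Hmon M [Hm Heq].
    assert (HmC : model M (complement_program P)).
    { intros r' [r [Hr ->]].
      destruct (classic (exists A, In A (neg r) /\ sat M A)) as [[A [HA HsA]] | Hno].
      - right. left. exists (compl A). split.
        + simpl. apply in_or_app. right. apply in_map; auto.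
        + unfold sat. simpl. intros [_ H]. exact (H HsA).
      - assert (Hr' : reduct P M (Rule (Defs.head r) (pos r) [])).
        { exists r. repeat split; auto. intros A HA HsA. apply Hno. eauto. }
        destruct (Hm _ Hr') as [Hs | [[B [HB HnB]] | [B [HB _]]]].
        + left. exact Hs.
        + right. left. exists B. split; auto. simpl. apply in_or_app. auto.
        + destruct HB. }
    split; auto.
    apply (@fix_transfer Atom (reduct P M)); auto.
    + intros S HS a [r' [[r [Hr [Hn ->]]] [Hh Hp]]].
      exists (compl_rule r). split; [exists r; auto|split; auto].
      simpl. intros B HB. apply in_app_or in HB. destruct HB as [HB | HB].
      * apply Hp; auto.
      * apply in_map_iff in HB. destruct HB as [A [<- HA]].
        pose proof (Hmon r Hr A HA) as Hmo.
        assert (Hnot : forall I, subset I (inter M (dom A)) -> ~ conds A I).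
        { intros I HI HcI. apply (Hn A HA). unfold sat.
          apply (Hmo I); auto. intros x [_ Hd]; exact Hd. }
        split.
        -- unfold sat. simpl. split.
           ++ intros x [_ Hd]; exact Hd.
           ++ apply Hnot. intros x [Hx Hd]. split; auto.
        -- intros I HI HIM. simpl. split.
           ++ intros x Hx. apply (HIM x Hx).
           ++ apply Hnot; auto.
    + apply TPn_sub_M; auto. apply compl_neg.
Qed.
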